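(* Let $A(x)=\sin^2(2\pi x)$, $\hat m(A)=\frac{A(1/3)+A(2/3)}{2}$, $\eta(x)=\frac{x}{4}+\frac12$, $F(x)=A(\frac{x}{2})+A(\frac{x}{4}+\frac12)$, and $V_2(x)=\lim_{n\to\infty}\sum_{i=0}^{n-1}[F(\eta^i(x))-2\hat m(A)]$ for $x\in[0,1]$. Then for each $N$, $V_2(x)=\sum_{i=0}^{N}\bigl(F(\eta^i(x))-2\hat m(A)\bigr)+\epsilon_N(x)$ where $$|\epsilon_N(x)|\le 2\pi\sum_{i=N}^{\infty}\frac{1}{4^i}=\frac{2\pi}{3\cdot4^{N-1}}\le\frac{2}{3\cdot 4^{N-2}}.$$
   Context: $\eta^i$ denotes the $i$-th iterate of $\eta$, with $\eta^0$ the identity. *)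

(* Defs.v *)
From Stdlib Require Import Reals.
From Coquelicot Require Import Coquelicot.
Open Scope R_scope.

Definition A (x : R) : R := (sin (2 * PI * x)) ^ 2.

Definition mhat : R := (A (1/3) + A (2/3)) / 2.

Definition eta (x : R) : R := x / 4 + 1 / 2.

Definition eta_iter (i : nat) (x : R) : R := Nat.iter i eta x.

Definition F (x : R) : R := A (x / 2) + A (x / 4 + 1 / 2).

Definition term (x : R) (i : nat) : R := F (eta_iter i x) - 2 * mhat.

Fixpoint psum (f : nat -> R) (n : nat) : R :=
  match n with
  | O => 0
  | S m => psum f m + f m
  end.

Definition V2 (x : R) : R := real (Lim_seq (fun n => psum (term x) n)).

Definition epsN (N : nat) (x : R) : R := V2 x - psum (term x) (S N).

(* Main.v *)
Require Import Defs.
From Stdlib Require Import Reals Lra Lia.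
From Coquelicot Require Import Coquelicot.
Open Scope R_scope.

Lemma sin_abs_pos t : 0 < t -> Rabs (sin t) <= t.
Proof.
  intro Ht. pose proof (sin_lt_x t Ht). apply Rabs_le. split; [|lra].
  destruct (Rle_lt_dec 1 t).
  - pose proof (SIN_bound t); lra.
  - pose proof PI2_1. pose proof (sin_lt_0_var (-t)). rewrite sin_neg in H1. lra.
Qed.

Lemma sin_abs t : Rabs (sin t) <= Rabs t.
Proof.
  destruct (Rtotal_order t 0) as [H|[H|H]].
  - rewrite <- Rabs_Ropp, <- sin_neg, <- (Rabs_Ropp t).
    rewrite (Rabs_right (-t)) by lra. apply sin_abs_pos; lra.
  - subst. rewrite sin_0, Rabs_R0. lra.
  - rewrite (Rabs_right t) by lra. apply sin_abs_pos; lra.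
Qed.

Lemma A_lip u v : Rabs (A u - A v) <= 2 * PI * Rabs (u - v).
Proof.
  unfold A.
  assert (E : sin (2*PI*u) ^ 2 - sin (2*PI*v) ^ 2 =
              sin (2*PI*u + 2*PI*v) * sin (2*PI*u - 2*PI*v)).
  { rewrite sin_plus, sin_minus.
    pose proof (sin2_cos2 (2*PI*u)). pose proof (sin2_cos2 (2*PI*v)).
    unfold Rsqr in *. nra. }
  rewrite E, Rabs_mult.
  pose proof (SIN_bound (2*PI*u + 2*PI*v)).
  pose proof (sin_abs (2*PI*u - 2*PI*v)).
  assert (Rabs (2*PI*u - 2*PI*v) = 2*PI*Rabs (u-v)).
  { replace (2*PI*u - 2*PI*v) with ((2*PI)*(u-v)) by ring.
    rewrite Rabs_mult, (Rabs_right (2*PI)) by (pose proof PI2_1; lra). reflexivity. }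
  assert (Rabs (sin (2*PI*u + 2*PI*v)) <= 1) by (apply Rabs_le; lra).
  pose proof (Rabs_pos (sin (2 * PI * u - 2 * PI * v))).
  pose proof (Rabs_pos (sin (2 * PI * u + 2 * PI * v))).
  apply Rle_trans with (1 * Rabs (sin (2 * PI * u - 2 * PI * v))).
  - apply Rmult_le_compat_r; lra.
  - lra.
Qed.

Lemma F_fix : F (2/3) = 2 * mhat.
Proof.
  unfold F, mhat. replace (2/3/2) with (1/3) by field.
  replace (2/3/4 + 1/2) with (2/3) by field. field.
Qed.

Lemma eta_iter_dist x i : eta_iter i x - 2/3 = (x - 2/3) / 4 ^ i.
Proof.
  induction i; simpl.
  - field.
  - unfold eta_iter in *. simpl. unfold eta at 1.
    replace (Nat.iter i eta x / 4 + 1/2 - 2/3) with ((Nat.iter i eta x - 2/3)/4) by field.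
    rewrite IHi. field. apply pow_nonzero; lra.
Qed.

Lemma term_bound x i : 0 <= x <= 1 -> Rabs (term x i) <= 2 * PI * / 4 ^ i.
Proof.
  intro hx. unfold term. rewrite <- F_fix. unfold F.
  set (y := eta_iter i x).
  pose proof (A_lip (y/2) (2/3/2)). pose proof (A_lip (y/4+1/2) (2/3/4+1/2)).
  replace (y/2 - 2/3/2) with ((y - 2/3)/2) in H by field.
  replace (y/4+1/2 - (2/3/4+1/2)) with ((y - 2/3)/4) in H0 by field.
  assert (Hy : Rabs (y - 2/3) <= (2/3) * / 4 ^ i).
  { unfold y. rewrite eta_iter_dist. unfold Rdiv. rewrite Rabs_mult.
    rewrite (Rabs_right (/ 4 ^ i)).
    2: { apply Rle_ge, Rlt_le, Rinv_0_lt_compat, pow_lt; lra. }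
    apply Rmult_le_compat_r. { apply Rlt_le, Rinv_0_lt_compat, pow_lt; lra. }
    apply Rabs_le; lra. }
  unfold Rdiv in H, H0. rewrite Rabs_mult in H, H0.
  rewrite (Rabs_right (/2)) in H by lra. rewrite (Rabs_right (/4)) in H0 by lra.
  pose proof PI2_1.
  eapply Rle_trans.
  { replace (A (y / 2) + A (y / 4 + 1 / 2) - (A (2 / 3 / 2) + A (2 / 3 / 4 + 1 / 2)))
      with ((A (y / 2) - A (2 / 3 / 2)) + (A (y / 4 + 1 / 2) - A (2 / 3 / 4 + 1 / 2))) by ring.
    apply Rabs_triang. }
  assert (2*PI*Rabs (y - 2/3) <= 2*PI*((2/3) * / 4 ^ i)) by (apply Rmult_le_compat_l; lra).
  assert (0 < / 4 ^ i) by (apply Rinv_0_lt_compat, pow_lt; lra).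
  unfold Rdiv in *. set (r := Rabs (y - 2 * / 3)) in *. set (q := / 4 ^ i) in *. set (a1 := Rabs (A (y * / 2) - A (2 * / 3 * / 2))) in *. set (a2 := Rabs (A (y * / 4 + 1 * / 2) - A (2 * / 3 * / 4 + 1 * / 2))) in *. assert (0 < PI * q) by (apply Rmult_lt_0_compat; lra). lra.
Qed.

Lemma geom_series N : is_series (fun k => / 4 ^ (N + k)) (/ 4 ^ N * (4/3)).
Proof.
  replace (/ 4 ^ N * (4/3)) with ((/ (1 - /4)) * / 4 ^ N) by (field; apply pow_nonzero; lra).
  eapply is_series_ext.
  2: { apply (is_series_scal_r (/ 4 ^ N)). apply is_series_geom.
       rewrite Rabs_right; lra. }
  intro n. simpl.
  rewrite pow_add, Rinv_mult, pow_inv. ring.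
Qed.

Lemma psum_sum f n : psum f (S n) = sum_f_R0 f n.
Proof.
  induction n; simpl. ring. simpl in IHn. rewrite <- IHn. reflexivity.
Qed.

Lemma ex_bound N : ex_series (fun k => 2 * PI * / 4 ^ (N + k)).
Proof.
  eexists. eapply is_series_ext.
  2: apply (is_series_scal_r (2 * PI)), (geom_series N).
  intro n. apply Rmult_comm.
Qed.

Lemma inv4_mono N k : / 4 ^ (S N + k) <= / 4 ^ (N + k).
Proof.
  apply Rinv_le_contravar. apply pow_lt; lra. apply Rle_pow; [lra|lia].
Qed.

Lemma inv4_pos n : 0 < / 4 ^ n.
Proof. apply Rinv_0_lt_compat, pow_lt; lra. Qed.

Theorem mainTheorem7 (x : R) (N : nat) (hx : 0 <= x <= 1) :
  ex_finite_lim_seq (fun n => psum (term x) n) /\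
  V2 x = psum (term x) (S N) + epsN N x /\
  ex_series (fun k => / 4 ^ (N + k)) /\
  Rabs (epsN N x) <= 2 * PI * Series (fun k => / 4 ^ (N + k)) /\
  2 * PI * Series (fun k => / 4 ^ (N + k)) = 2 * PI / (3 * powerRZ 4 (Z.of_nat N - 1)) /\
  2 * PI / (3 * powerRZ 4 (Z.of_nat N - 1)) <= 2 / (3 * powerRZ 4 (Z.of_nat N - 2)).
Proof.
  pose proof PI2_1 as HPI. pose proof PI_4 as HPI4.
  assert (Hex : ex_series (term x)).
  { apply (ex_series_le (term x) (fun n => 2 * PI * / 4 ^ (0 + n))).
    intro n. apply (term_bound x n hx). apply (ex_bound 0). }
  set (Sv := Series (term x)).
  assert (Hlim : is_lim_seq (fun n => psum (term x) n) Sv).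
  { apply is_lim_seq_incr_1.
    eapply is_lim_seq_ext.
    2: { pose proof (Series_correct _ Hex) as H. exact H. }
    intro n. simpl. rewrite sum_n_Reals, <- psum_sum. reflexivity. }
  assert (HV : V2 x = Sv).
  { unfold V2. rewrite (is_lim_seq_unique _ _ Hlim). reflexivity. }
  assert (HG := geom_series N).
  assert (HGv : Series (fun k => / 4 ^ (N + k)) = / 4 ^ N * (4/3)) by (apply is_series_unique; exact HG).
  assert (HP1 : powerRZ 4 (Z.of_nat N - 1) = 4 ^ N / 4).
  { unfold Z.sub. rewrite powerRZ_add by lra. rewrite <- pow_powerRZ.
    simpl. unfold Rdiv. f_equal. field. }
  assert (HP2 : powerRZ 4 (Z.of_nat N - 2) = 4 ^ N / 16).
  { unfold Z.sub. rewrite powerRZ_add by lra. rewrite <- pow_powerRZ.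
    simpl. unfold Rdiv. f_equal. field. }
  assert (H4N : 0 < 4 ^ N) by (apply pow_lt; lra).
  split; [exists Sv; exact Hlim|].
  split; [unfold epsN; ring|].
  split; [eexists; exact HG|].
  split.
  { unfold epsN. rewrite HV, psum_sum. unfold Sv.
    rewrite (Series_incr_n _ (S N)) by (lia || exact Hex). simpl pred.
    replace (sum_f_R0 (term x) N + Series (fun k => term x (S N + k)) - sum_f_R0 (term x) N)
      with (Series (fun k => term x (S N + k))) by ring.
    assert (Hb : forall k, Rabs (term x (S N + k)) <= 2 * PI * / 4 ^ (N + k)).
    { intro k. eapply Rle_trans. apply term_bound; exact hx.
      apply Rmult_le_compat_l. lra. apply inv4_mono. }
    eapply Rle_trans. apply Series_Rabs.
    { apply (@ex_series_le R_AbsRing R_CompleteNormedModule (fun k => Rabs (term x (S N + k))) (fun k => 2 * PI * / 4 ^ (N + k))).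
      intro k. unfold norm; simpl. unfold abs; simpl. rewrite Rabs_Rabsolu. apply Hb. apply ex_bound. }
    rewrite <- Series_scal_l. apply Series_le.
    - intro k. split. apply Rabs_pos. apply Hb.
    - apply ex_bound. }
  split.
  { rewrite HGv, HP1. field. lra. }
  rewrite HP1, HP2.
  apply Rmult_le_reg_r with (3 * 4 ^ N). lra.
  replace (2 * PI / (3 * (4 ^ N / 4)) * (3 * 4 ^ N)) with (8 * PI) by (field; lra).
  replace (2 / (3 * (4 ^ N / 16)) * (3 * 4 ^ N)) with 32 by (field; lra).
  lra.
Qed.
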